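(* Let $n$ be a positive integer and $V=\{v_1<v_2<\dots<v_n\}$ a set of $n$ positive integers with $v_n\le n v_1$. Then, with $t=\frac{1}{v_1+v_n}$, one has $\|tv\|\ge\frac{1}{n+1}$ for every $v\in V$; in particular $\kappa(V)\ge\frac{1}{n+1}$. Consequently, for every set $V=\{v_1<\dots<v_n\}$ of positive integers with $n\ge 2$ and every integer $a\ge \frac{v_n-nv_1}{n-1}$, $a\ge 0$, the translate $a+V=\{a+v: v\in V\}$ satisfies $\kappa(a+V)\ge\frac{1}{n+1}$.
   Context: For $x\in\mathbb{R}$, $\|x\|=\min\{x-\lfloor x\rfloor,\lceil x\rceil-x\}$ denotes the distance from $x$ to the nearest integer. For a finite nonempty set $V$ of positive integers, $\kappa(V)=\sup_{t\in(0,1)}\min_{v\in V}\|tv\|$. *)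

(* Defs.v *)
From HB Require Import structures.
From mathcomp Require Import all_boot all_order all_algebra.
From mathcomp Require Import all_classical all_reals.
Set Implicit Arguments. Unset Strict Implicit. Unset Printing Implicit Defensive.
Import Order.TTheory GRing.Theory Num.Theory.
Local Open Scope ring_scope.
Local Open Scope classical_set_scope.

Definition dist_int {R : realType} (x : R) : R :=
  Num.min (x - (Num.floor x)%:~R) ((Num.ceil x)%:~R - x).

(* min_{v in V} ||t v||, for V a (nonempty) finite list of positive integers.
   The neutral element 1 is harmless since ||.|| <= 1/2. *)
Definition min_dist {R : realType} (V : seq nat) (t : R) : R :=
  \big[Num.min/1]_(v <- V) dist_int (t * v%:R).

Definition kappa {R : realType} (V : seq nat) : R :=
  sup [set y : R | exists t : R, 0 < t < 1 /\ y = min_dist V t].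

Definition posset (V : seq nat) : Prop := sorted ltn V /\ all (fun v => 0 < v)%N V.

(* Main.v *)
Require Import Defs.
From HB Require Import structures.
From mathcomp Require Import all_boot all_order all_algebra.
From mathcomp Require Import all_classical all_reals.
From mathcomp Require Import lra.
Import Order.TTheory GRing.Theory Num.Theory.
Local Open Scope ring_scope.

Lemma dist_lb (R : realType) (x c : R) :
  0 < x < 1 -> c <= x -> c <= 1 - x -> c <= dist_int x.
Proof.
move=> /andP[x0 x1] h1 h2.
have fl : Num.floor x = 0 by apply: floor_def; rewrite add0r /= (ltW x0) x1.
have cl : Num.ceil x = 1 by apply: ceil_def; rewrite subrr /= x0 (ltW x1).
by rewrite /dist_int fl cl /= le_min subr0 h1 h2.
Qed.

Lemma path_bounds {x : nat} {s : seq nat} :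
  path ltn x s -> forall v, v \in x :: s -> (x <= v <= last x s)%N.
Proof.
elim: s x => [|y s IH] x /=.
  by move=> _ v; rewrite inE => /eqP ->; rewrite leqnn.
move=> /andP[xy ps] v; rewrite inE => /orP[/eqP ->|vin].
  rewrite leqnn /=.
  have := IH y ps y; rewrite inE eqxx => /(_ isT) /andP[_ h].
  by apply: leq_trans h; apply: ltnW.
have /andP[h1 h2] := IH y ps v vin.
by rewrite h2 andbT; apply: leq_trans h1; apply: ltnW.
Qed.

Lemma min_dist_le1 (R : realType) V (t : R) : min_dist V t <= 1.
Proof.
rewrite /min_dist; elim: V => [|v V IH]; first by rewrite big_nil.
by rewrite big_cons ge_min IH orbT.
Qed.

Lemma min_dist_lb (R : realType) V (t c : R) : c <= 1 ->
  (forall v, v \in V -> c <= dist_int (t * v%:R)) -> c <= min_dist V t.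
Proof.
move=> c1; rewrite /min_dist; elim: V => [|v V IH] h; first by rewrite big_nil.
rewrite big_cons le_min h ?mem_head //= IH // => w wV.
by apply: h; rewrite inE wV orbT.
Qed.

Lemma kappa_lb (R : realType) V (t c : R) : 0 < t < 1 ->
  c <= min_dist V t -> c <= kappa V.
Proof.
move=> ht hc; apply: (le_trans hc); rewrite /kappa.
apply: ub_le_sup; last by exists t.
exists 1 => y [s [_ ->]]; exact: min_dist_le1.
Qed.

Lemma part1 (R : realType) (n : nat) (V : seq nat) :
     (0 < n)%N -> size V = n -> posset V ->
     (last 0 V <= n * head 0 V)%N ->
     (forall v, v \in V ->
        dist_int (((head 0 V + last 0 V)%:R)^-1 * v%:R : R) >= (n.+1%:R)^-1)
     /\ kappa V >= (n.+1%:R)^-1 :> R.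
Proof.
case: V => [|x s] n0 sz [ps pos]; first by rewrite -sz in n0.
rewrite /= => hL.
set L := last x s.
have x0 : (0 < x)%N by move: pos => /= /andP[].
have xL : (x <= L)%N.
  by have /andP[] := path_bounds ps _ (mem_head x s).
set S : R := (x + L)%:R.
set c : R := (n.+1%:R)^-1.
have xR : (1 : R) <= x%:R by rewrite ler1n.
have LR : (x%:R : R) <= L%:R by rewrite ler_nat.
have SE : S = x%:R + L%:R by rewrite /S natrD.
have LnR : (L%:R : R) <= n%:R * x%:R by rewrite -natrM ler_nat.
have cpos : 0 < c by rewrite invr_gt0 ltr0n.
have cn : c * (n%:R + 1) = 1.
  by rewrite /c -natr1 mulVf // natr1 pnatr_eq0.
have Spos : 0 < S by rewrite SE; lra.
have uS : S^-1 * S = 1 by rewrite mulVf // gt_eqF.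
have upos : 0 < S^-1 by rewrite invr_gt0.
have cSx : c * S <= x%:R.
  have : c * S <= c * ((n%:R + 1) * x%:R).
    by rewrite ler_wpM2l ?(ltW cpos) // SE; lra.
  by rewrite mulrA cn mul1r.
have key : forall w : R, c * S <= w -> c <= S^-1 * w.
  move=> w hw; have := ler_wpM2l (ltW upos) hw.
  by rewrite mulrCA uS mulr1.
have hv : forall v, v \in x :: s -> c <= dist_int (S^-1 * v%:R).
  move=> v vin; have /andP[h1 h2] := path_bounds ps _ vin.
  have v1 : (x%:R : R) <= v%:R by rewrite ler_nat.
  have v2 : (v%:R : R) <= L%:R by rewrite ler_nat.
  apply: dist_lb.
  - apply/andP; split; first by rewrite mulr_gt0 // ltr0n; apply: leq_trans h1.
    have : S^-1 * v%:R < S^-1 * S by rewrite ltr_pM2l // SE; lra.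
    by rewrite uS.
  - by apply: key; lra.
  - have -> : 1 - S^-1 * v%:R = S^-1 * (S - v%:R) by rewrite mulrBr uS.
    by apply: key; rewrite SE; lra.
split; first exact: hv.
apply: (@kappa_lb _ _ (S^-1)).
  apply/andP; split => //.
  have : S^-1 * 1 < S^-1 * S by rewrite ltr_pM2l // SE; lra.
  by rewrite uS mulr1.
apply: min_dist_lb; last exact: hv.
rewrite /c invf_le1 ?ltr0n // ler1n //.
Qed.

Theorem mainTheorem5 (R : realType) :
  (forall (n : nat) (V : seq nat),
     (0 < n)%N -> size V = n -> posset V ->
     (last 0 V <= n * head 0 V)%N ->
     (forall v, v \in V ->
        dist_int (((head 0 V + last 0 V)%:R)^-1 * v%:R : R) >= (n.+1%:R)^-1)
     /\ kappa V >= (n.+1%:R)^-1 :> R)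
  /\
  (forall (n : nat) (V : seq nat) (a : int),
     (2 <= n)%N -> size V = n -> posset V ->
     a >= 0 ->
     (a%:~R : R) >= ((last 0 V)%:R - n%:R * (head 0 V)%:R) / (n.-1)%:R ->
     kappa [seq (`|a|%N + v)%N | v <- V] >= (n.+1%:R)^-1 :> R).
Proof.
split; first exact: part1.
move=> n V a n2 sz [ps pos] a0 ha.
have aE : (a%:~R : R) = (`|a|%N)%:R by rewrite natr_absz ger0_norm.
rewrite aE in ha.
case: V sz ps pos ha => [|x s] sz ps pos ha; first by rewrite -sz in n2.
set k := `|a|%N in ha *.
apply: (proj2 (@part1 R n _ _ _ _ _)).
- by apply: leq_trans n2.
- by rewrite size_map.
- split.
    rewrite /=; apply: (homo_path (e := ltn)) => //.
    by move=> p q /=; rewrite ltn_add2l.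
  apply/allP => w /mapP[v vin ->]; rewrite addn_gt0 orbC; move: pos => /allP /(_ v vin) -> //.
- rewrite /= last_map.
  move: ha; rewrite /=.
case: n n2 {sz} => [|[|m]] // _ /=.
move=> ha; rewrite ler_pdivrMr ?ltr0n // in ha.
  rewrite -(ler_nat R) !natrD !natrM ?natrD.
  rewrite -[m.+2]addn2 -[m.+1]addn1 !natrD in ha.
  nra.
Qed.
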